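(* Let $n\ge2$, $N\ge1$, $L>0$, $h=L/N$, $\Delta t>0$, and let $b_{ij}>0$ with $b_{ij}=b_{ji}$ for $i\neq j$, $i,j=1,\dots,n$. Let $\rho^k=(\rho^k_1,\dots,\rho^k_n)$ be cell-centered with $\rho^k_{i,\ell}>0$ for all $i,\ell$ and $\sum_{i=1}^n\rho^k_{i,\ell}=1$ for all $\ell$. Then there exists $\delta_0>0$ such that for every $0<\delta\le\delta_0$: an $n$-tuple $\rho^{k+1}$ of cell-centered grid functions with $\rho^{k+1}_{i,\ell}>0$ for all $i,\ell$ is a solution of the scheme (i.e. there is an $n$-tuple $v^{k+1}$ of edge-centered grid functions such that for all $i$ and $\ell$ $$\frac{\rho^{k+1}_{i,\ell}-\rho^k_{i,\ell}}{\Delta t}+\big(d_h(\hat\rho^k_iv^{k+1}_i)\big)_\ell=0,$$ $$-\sum_{j=1}^nb_{ij}\hat\rho^k_{j,\ell+\frac12}\big(v^{k+1}_{i,\ell+\frac12}-v^{k+1}_{j,\ell+\frac12}\big)=\big(D_h\log\rho^{k+1}_i\big)_{\ell+\frac12}-\frac{1}{\sum_{j=1}^n\hat\rho^k_{j,\ell+\frac12}}\sum_{j=1}^n\hat\rho^k_{j,\ell+\frac12}\big(D_h\log\rho^{k+1}_j\big)_{\ell+\frac12},$$ $$\sum_{j=1}^n\hat\rho^k_{j,\ell+\frac12}v^{k+1}_{j,\ell+\frac12}=0\,)$$ if and only if $\rho^{k+1}$ is the $\rho$-component of a minimizer $(\rho,w)$ over the set $K_\delta$ of the functional $$J(\rho,w)=\frac{1}{4\Delta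 t}\,h\sum_{\ell=1}^N\sum_{i,j=1}^nb_{ij}\hat\rho^k_{i,\ell+\frac12}\hat\rho^k_{j,\ell+\frac12}\big(w_{i,\ell+\frac12}-w_{j,\ell+\frac12}\big)^2+h\sum_{\ell=1}^N\sum_{i=1}^n\rho_{i,\ell}\log\rho_{i,\ell},$$ where $K_\delta$ is the set of pairs $(\rho,w)$, $\rho$ an $n$-tuple of cell-centered and $w$ an $n$-tuple of edge-centered grid functions, such that for all $i=1,\dots,n$ and $\ell=1,\dots,N$: $\rho_{i,\ell}\ge\delta$, $\rho_{i,\ell}-\rho^k_{i,\ell}+\big(d_h(\hat\rho^k_iw_i)\big)_\ell=0$, $\sum_{i=1}^n\hat\rho^k_{i,\ell+\frac12}w_{i,\ell+\frac12}=0$, and $\sum_{i=1}^n\rho_{i,\ell}=1$.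
   Context: Grid on the torus $[0,L]$ with $N$ intervals, $h=L/N$: cell-centered grid functions are $N$-periodic sequences $(f_\ell)_{\ell\in\mathbb Z}$ (values at $\ell h$); edge-centered ones are $N$-periodic sequences $(f_{\ell+\frac12})$ (values at $(\ell+\frac12)h$). For edge-centered $\phi$, $(d_h\phi)_\ell=(\phi_{\ell+\frac12}-\phi_{\ell-\frac12})/h$; for cell-centered $f$, $(D_hf)_{\ell+\frac12}=(f_{\ell+1}-f_\ell)/h$ and $\hat f_{\ell+\frac12}=(f_\ell+f_{\ell+1})/2$. Products and logarithms are pointwise; terms with $j=i$ vanish, so $b_{ii}$ plays no role. *)

(* Defs.v *)
From HB Require Import structures.
From mathcomp Require Import all_boot all_order all_algebra.
From mathcomp Require Import reals exp.
Set Implicit Arguments. Unset Strict Implicit. Unset Printing Implicit Defensive.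
Import Order.TTheory GRing.Theory Num.Theory.
Local Open Scope ring_scope.

(* Grid functions on the torus with N cells are functions 'I_N -> R.
   Cell-centered f : f l = f_l.  Edge-centered phi : phi l = phi_{l+1/2}.
   Periodicity is encoded by the cyclic successor/predecessor ordS/ord_pred. *)

Section Grid.
Variables (R : realType) (N : nat) (h : R).

Definition d_h (phi : 'I_N -> R) (l : 'I_N) : R :=
  (phi l - phi (ord_pred l)) / h.

Definition D_h (f : 'I_N -> R) (l : 'I_N) : R :=
  (f (ordS l) - f l) / h.

Definition hat (f : 'I_N -> R) (l : 'I_N) : R :=
  (f l + f (ordS l)) / 2.
End Grid.

Section Scheme.
Variables (R : realType) (n N : nat) (L dt : R) (b : 'I_n -> 'I_n -> R)
  (rhok : 'I_n -> 'I_N -> R).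

Definition hstep : R := L / N%:R.

Definition gmul (f g : 'I_N -> R) : 'I_N -> R := fun l => f l * g l.
Definition glog (f : 'I_N -> R) : 'I_N -> R := fun l => ln (f l).

Definition scheme_with (rhonew : 'I_n -> 'I_N -> R) (v : 'I_n -> 'I_N -> R) : Prop :=
  forall (i : 'I_n) (l : 'I_N),
    [/\ (rhonew i l - rhok i l) / dt + d_h hstep (gmul (hat (rhok i)) (v i)) l = 0,
        - (\sum_(j < n) b i j * hat (rhok j) l * (v i l - v j l))
          = D_h hstep (glog (rhonew i)) l
            - (\sum_(j < n) hat (rhok j) l)^-1
              * (\sum_(j < n) hat (rhok j) l * D_h hstep (glog (rhonew j)) l)
      & \sum_(j < n) hat (rhok j) l * v j l = 0].

Definition solves_scheme (rhonew : 'I_n -> 'I_N -> R) : Prop :=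
  exists v : 'I_n -> 'I_N -> R, scheme_with rhonew v.

Definition K_delta (delta : R) (rho w : 'I_n -> 'I_N -> R) : Prop :=
  forall (i : 'I_n) (l : 'I_N),
    [/\ delta <= rho i l,
        rho i l - rhok i l + d_h hstep (gmul (hat (rhok i)) (w i)) l = 0,
        \sum_(j < n) hat (rhok j) l * w j l = 0
      & \sum_(j < n) rho j l = 1].

Definition J (rho w : 'I_n -> 'I_N -> R) : R :=
  (4 * dt)^-1 * (hstep * \sum_(l < N) \sum_(i < n) \sum_(j < n)
      b i j * hat (rhok i) l * hat (rhok j) l * (w i l - w j l) ^+ 2)
  + hstep * \sum_(l < N) \sum_(i < n) rho i l * ln (rho i l).

Definition is_minimizer (delta : R) (rho w : 'I_n -> 'I_N -> R) : Prop :=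
  K_delta delta rho w /\
  forall rho' w' : 'I_n -> 'I_N -> R, K_delta delta rho' w' -> J rho w <= J rho' w'.
End Scheme.

(* Main.v *)
Require Import Defs.
From HB Require Import structures.
From mathcomp Require Import all_boot all_order all_algebra.
From mathcomp Require Import reals exp.
From mathcomp Require Import all_classical all_reals all_analysis.
From mathcomp Require Import ring lra.
Set Implicit Arguments. Unset Strict Implicit. Unset Printing Implicit Defensive.
Import Order.TTheory GRing.Theory Num.Theory.
Import numFieldTopology.Exports numFieldNormedType.Exports.
Local Open Scope ring_scope.


Section Reals.
Variable R : realType.

Lemma ln_le_sub1 (u : R) : 0 < u -> ln u <= u - 1.
Proof.
move=> u0; have := expR_ge1Dx (ln u); rewrite lnK ?posrE //; lra.
Qed.

Lemma ln_lt_sub1 (u : R) : 0 < u -> u != 1 -> ln u < u - 1.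
Proof.
move=> u0 u1; have : ln u != 0 by rewrite ln_eq0.
move=> /expR_gt1Dx; rewrite lnK ?posrE //; lra.
Qed.

Definition Bt (x y : R) := x * ln x - y * ln y - (ln y + 1) * (x - y).

Lemma Bt_alt (x y : R) : 0 < x -> 0 < y -> Bt x y = - x * ln (y / x) - (x - y).
Proof.
move=> x0 y0; rewrite /Bt lnM ?posrE ?invr_gt0 // lnV ?posrE //; ring.
Qed.

Lemma Bt_ge0 (x y : R) : 0 < x -> 0 < y -> 0 <= Bt x y.
Proof.
move=> x0 y0; rewrite Bt_alt //.
have h1 := ln_le_sub1 (divr_gt0 y0 x0).
have : x * ln (y / x) <= x * (y / x - 1) by rewrite ler_pM2l.
rewrite mulrBr mulrCA divff ?gt_eqF // mulr1; lra.
Qed.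

Lemma Bt_gt0 (x y : R) : 0 < x -> 0 < y -> x != y -> 0 < Bt x y.
Proof.
move=> x0 y0 xy; rewrite Bt_alt //.
have yx1 : y / x != 1.
  apply/negP => /eqP e; move: xy; have -> : y = x by rewrite -[y](divfK (lt0r_neq0 x0)) e mul1r.
  by rewrite eqxx.
have h1 := ln_lt_sub1 (divr_gt0 y0 x0) yx1.
have : x * ln (y / x) < x * (y / x - 1) by rewrite ltr_pM2l.
rewrite mulrBr mulrCA divff ?gt_eqF // mulr1; lra.
Qed.

Lemma Bt_le (x y : R) : 0 < x -> 0 < y -> Bt x y <= (x - y) ^+ 2 / y.
Proof.
move=> x0 y0; rewrite Bt_alt //.
have -> : - x * ln (y / x) = x * ln (x / y).
  by rewrite !lnM ?posrE ?invr_gt0 // !lnV ?posrE //; ring.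
have h1 := ln_le_sub1 (divr_gt0 x0 y0).
have : x * ln (x / y) <= x * (x / y - 1) by rewrite ler_pM2l.
have -> : (x - y) ^+ 2 / y = x * (x / y - 1) - (x - y).
  by field; rewrite gt_eqF.
lra.
Qed.

Lemma antisym_sum0 (I : finType) (c : I -> I -> R) :
  (forall i j, c j i = - c i j) -> \sum_i \sum_j c i j = 0.
Proof.
move=> anti; set S := \sum_i _.
have : S = - S.
  rewrite {1}/S exchange_big /= /S -sumrN; apply: eq_bigr => j _.
  rewrite -sumrN; apply: eq_bigr => i _; exact: anti.
lra.
Qed.

End Reals.


Section Helpers.
Variable R : realType.

Lemma le_sum_term (I : finType) (F : I -> R) i : (forall j, 0 <= F j) -> F i <= \sum_j F j.
Proof.
move=> F0; rewrite (bigD1 i) //= -[X in X <= _]addr0 lerD //.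
by apply: sumr_ge0 => j _.
Qed.

Lemma posmin (I : finType) (g : I -> R) : (forall i, 0 < g i) ->
  exists2 m, 0 < m & forall i, m <= g i.
Proof.
move=> g0; have S0 : 0 <= \sum_i (g i)^-1 by apply: sumr_ge0 => i _; rewrite invr_ge0 ltW.
exists (1 + \sum_i (g i)^-1)^-1; first by rewrite invr_gt0; lra.
move=> i; have gi := g0 i.
have : (g i)^-1 <= \sum_j (g j)^-1 by apply: le_sum_term => j; rewrite invr_ge0 ltW.
move=> le; rewrite -[g i]invrK lef_pV2 ?posrE ?invr_gt0 //; first lra.
lra.
Qed.

Lemma exists_ge (I : finType) (F : I -> R) c : (0 < #|I|)%N ->
  #|I|%:R * c <= \sum_i F i -> exists i, c <= F i.
Proof.
move=> I0 S; apply/not_existsP => /= H.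
have : \sum_i F i < \sum_(i : I) c.
  apply: ltr_sum.
    by move: I0 => /card_gt0P [x _]; apply/hasP; exists x; rewrite ?mem_index_enum.
  by move=> i _; rewrite ltNge; apply/negP => /(fun h => H i h).
rewrite sumr_const -mulr_natl.
move=> lt; have e : (#|I|%:R : R) * c < #|I|%:R * c.
  by apply: le_lt_trans lt; rewrite -(eq_card (fun x : I => erefl true)).
lra.
Qed.

Lemma sum_ind (I : finType) (a : I) (F : I -> R) : \sum_k (k == a)%:R * F k = F a.
Proof.
rewrite (bigD1 a) //= eqxx mul1r big1 ?addr0 // => k /negbTE ->; by rewrite mul0r.
Qed.

Lemma ind_norm (x y : bool) : `|x%:R - y%:R : R| <= 1.
Proof. by case: x; case: y; rewrite ?subrr ?normr0 ?sub0r ?subr0 ?normrN ?normr1. Qed.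

Lemma xlnx_ge (x : R) : 0 < x -> -1 <= x * ln x.
Proof.
move=> x0; have xi : 0 < x^-1 by rewrite invr_gt0.
have := ln_le_sub1 xi; rewrite lnV ?posrE // => h.
have : x * (- ln x) <= x * (x^-1 - 1) by rewrite ler_pM2l.
rewrite mulrBr divff ?lt0r_neq0 // mulr1; lra.
Qed.

Lemma abs_le_sq (x : R) : `|x| <= 1 + x ^+ 2.
Proof.
have [x0|x0] := leP 0 x.
  rewrite ger0_norm //; nra.
rewrite ltr0_norm //; nra.
Qed.


Lemma sum_sg (I : finType) (a c : I) (F : I -> R) :
  \sum_k ((k == a)%:R - (k == c)%:R) * F k = F a - F c.
Proof.
under eq_bigr do rewrite mulrBl.
by rewrite sumrB !sum_ind.
Qed.

Lemma sum_ind1 (I : finType) (a : I) : \sum_k ((k == a)%:R : R) = 1.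
Proof.
rewrite (eq_bigr (fun k => (k == a)%:R * 1)); last by move=> k _; rewrite mulr1.
by rewrite sum_ind.
Qed.
End Helpers.


Section Cont.
Variable R : realType.
Variable m : nat.
Lemma cD (f g : 'rV[R]_m -> R) (u : 'rV[R]_m) : {for u, continuous f} -> {for u, continuous g} -> {for u, continuous (fun v => f v + g v)}.
Proof. exact: continuousD. Qed.
Lemma cM (f g : 'rV[R]_m -> R) (u : 'rV[R]_m) : {for u, continuous f} -> {for u, continuous g} -> {for u, continuous (fun v => f v * g v)}.
Proof. exact: continuousM. Qed.
Lemma cN (f : 'rV[R]_m -> R) (u : 'rV[R]_m) : {for u, continuous f} -> {for u, continuous (fun v => - f v)}.
Proof. exact: continuousN. Qed.
Lemma cC (c : R) (u : 'rV[R]_m) : {for u, continuous (fun _ : 'rV[R]_m => c)}.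
Proof. exact: cst_continuous. Qed.
Lemma cK k (u : 'rV[R]_m) : {for u, continuous (fun v : 'rV[R]_m => v ord0 k)}.
Proof. exact: coord_continuous. Qed.
Lemma cL (f : 'rV[R]_m -> R) (u : 'rV[R]_m) : {for u, continuous f} -> 0 < f u -> {for u, continuous (fun v => ln (f v))}.
Proof. move=> cf fp; apply: (continuous_comp cf); exact: continuous_ln. Qed.
Lemma cS (I : finType) (F : I -> 'rV[R]_m -> R) (u : 'rV[R]_m) : (forall i, {for u, continuous (F i)}) ->
  {for u, continuous (fun v => \sum_i F i v)}.
Proof.
move=> cF; rewrite unlock /=; elim: (index_enum I) => [|a s IH] /=.
  exact: cC.
exact: cD.
Qed.
Lemma cX (f : 'rV[R]_m -> R) (u : 'rV[R]_m) : {for u, continuous f} -> {for u, continuous (fun v => f v ^+ 2)}.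
Proof.
move=> cf; have -> : (fun v => f v ^+ 2) = (fun v => f v * f v) by apply: boolp.funext => v; rewrite expr2.
exact: cM.
Qed.
End Cont.

Section Grid.
Variables (R : realType) (n N : nat) (L dt : R) (b : 'I_n -> 'I_n -> R)
  (rhok : 'I_n -> 'I_N -> R).
Hypotheses (n0 : (0 < n)%N) (N1 : (1 <= N)%N) (L0 : 0 < L) (dt0 : 0 < dt)
  (bsym : forall i j : 'I_n, i != j -> 0 < b i j /\ b i j = b j i)
  (rk0 : forall (i : 'I_n) (l : 'I_N), 0 < rhok i l)
  (rk1 : forall l : 'I_N, \sum_(i < n) rhok i l = 1).

Local Notation h := (hstep N L).
Local Notation hk i l := (hat (rhok i) l).

Lemma h_gt0 : 0 < h.
Proof. by rewrite /hstep divr_gt0 // ltr0n. Qed.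

Lemma hk_gt0 i l : 0 < hk i l.
Proof. by rewrite /hat divr_gt0 // addr_gt0. Qed.

Lemma hk_sum l : \sum_(i < n) hk i l = 1.
Proof.
by rewrite /hat -mulr_suml big_split /= !rk1 -[1 + 1]/(2%:R) divff // pnatr_eq0.
Qed.

Lemma sum_pred (f : 'I_N -> R) : \sum_(l < N) f (ord_pred l) = \sum_(l < N) f l.
Proof. by rewrite [RHS](reindex_inj (can_inj (@ord_predK N))). Qed.

Lemma sum_succ (f : 'I_N -> R) : \sum_(l < N) f (ordS l) = \sum_(l < N) f l.
Proof. by rewrite [RHS](reindex_inj (can_inj (@ordSK N))). Qed.

Lemma sum_d_h (f : 'I_N -> R) : \sum_(l < N) d_h h f l = 0.
Proof.
rewrite /d_h -mulr_suml sumrB sum_pred subrr mul0r //.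
Qed.

Definition etaf (z : 'I_n -> 'I_N -> R) i l := - d_h h (gmul (hat (rhok i)) (z i)) l.
Definition isrho (w rho : 'I_n -> 'I_N -> R) :=
  forall i l, rho i l - rhok i l + d_h h (gmul (hat (rhok i)) (w i)) l = 0.
Definition consw (w : 'I_n -> 'I_N -> R) :=
  forall l, \sum_(j < n) hat (rhok j) l * w j l = 0.

Lemma isrhoE w rho : isrho w rho -> forall i l, rho i l = rhok i l + etaf w i l.
Proof. move=> H i l; have := H i l; rewrite /etaf; lra. Qed.

Lemma sum_eta z i : \sum_(l < N) etaf z i l = 0.
Proof. by rewrite /etaf sumrN sum_d_h oppr0. Qed.

Definition Qf (z : 'I_n -> 'I_N -> R) := (4 * dt)^-1 * (h * \sum_(l < N) \sum_(i < n) \sum_(j < n)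
      b i j * hk i l * hk j l * (z i l - z j l) ^+ 2).
Definition Ef (rho : 'I_n -> 'I_N -> R) := h * \sum_(l < N) \sum_(i < n) rho i l * ln (rho i l).
Definition LQ (w z : 'I_n -> 'I_N -> R) := (4 * dt)^-1 * (h * \sum_(l < N) \sum_(i < n) \sum_(j < n)
      b i j * hk i l * hk j l * (2 * (w i l - w j l) * (z i l - z j l))).
Definition Dfun (w rho z : 'I_n -> 'I_N -> R) :=
  LQ w z + h * \sum_(l < N) \sum_(i < n) etaf z i l * ln (rho i l).

Lemma JE rho w : J L dt b rhok rho w = Qf w + Ef rho.
Proof. by []. Qed.

Lemma Qf_ge0 z : 0 <= Qf z.
Proof.
rewrite /Qf; apply: mulr_ge0; first by rewrite invr_ge0 mulr_ge0 // ltW.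
apply: mulr_ge0; first exact: ltW h_gt0.
apply: sumr_ge0 => l _; apply: sumr_ge0 => i _; apply: sumr_ge0 => j _.
have [->|ij] := eqVneq i j; first by rewrite subrr expr0n /= mulr0.
have [b0 _] := bsym ij.
have h1 := hk_gt0 i l; have h2 := hk_gt0 j l.
apply: mulr_ge0; last exact: sqr_ge0.
by apply: mulr_ge0; [apply: mulr_ge0|]; apply: ltW.
Qed.

Lemma Qf_expand w z w' : (forall i l, w' i l = w i l + z i l) ->
  Qf w' = Qf w + LQ w z + Qf z.
Proof.
move=> Hw; rewrite /Qf /LQ -!mulrDr -!big_split /=; congr (_ * (_ * _)).
apply: eq_bigr => l _; rewrite -!big_split /=; apply: eq_bigr => i _.
rewrite -!big_split /=; apply: eq_bigr => j _; rewrite !Hw; ring.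
Qed.

Lemma Qf_scale t z : Qf (fun i l => t * z i l) = t ^+ 2 * Qf z.
Proof.
rewrite /Qf [RHS]mulrCA; congr (_ * _); rewrite [RHS]mulrCA; congr (_ * _).
rewrite mulr_sumr; apply: eq_bigr => l _; rewrite mulr_sumr; apply: eq_bigr => i _.
rewrite mulr_sumr; apply: eq_bigr => j _; ring.
Qed.

Lemma eta_scale t z i l : etaf (fun i l => t * z i l) i l = t * etaf z i l.
Proof. rewrite /etaf /d_h /gmul; ring. Qed.

Lemma Dfun_scale w rho t z : Dfun w rho (fun i l => t * z i l) = t * Dfun w rho z.
Proof.
rewrite /Dfun /LQ mulrDr; congr (_ + _).
  rewrite [RHS]mulrCA; congr (_ * _); rewrite [RHS]mulrCA; congr (_ * _).
  rewrite mulr_sumr; apply: eq_bigr => l _; rewrite mulr_sumr; apply: eq_bigr => i _.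
  rewrite mulr_sumr; apply: eq_bigr => j _; ring.
rewrite mulrCA; congr (_ * _).
rewrite mulr_sumr; apply: eq_bigr => l _; rewrite mulr_sumr; apply: eq_bigr => i _.
rewrite eta_scale; ring.
Qed.

Lemma J_expand w rho1 w' rho2 : isrho w rho1 -> isrho w' rho2 ->
  (forall i l, 0 < rho1 i l) -> (forall i l, 0 < rho2 i l) ->
  J L dt b rhok rho2 w' - J L dt b rhok rho1 w =
  Dfun w rho1 (fun i l => w' i l - w i l) + Qf (fun i l => w' i l - w i l)
  + h * \sum_(l < N) \sum_(i < n) Bt (rho2 i l) (rho1 i l).
Proof.
move=> H1 H2 p1 p2.
rewrite !JE (@Qf_expand w (fun i l => w' i l - w i l) w'); last by move=> i l; ring.
rewrite /Dfun.
suff : Ef rho2 - Ef rho1 = h * \sum_(l < N) \sum_(i < n) etaf (fun i l => w' i l - w i l) i l * ln (rho1 i l)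
   + h * \sum_(l < N) \sum_(i < n) Bt (rho2 i l) (rho1 i l) by lra.
have He : forall i l, rho2 i l - rho1 i l = etaf (fun i l => w' i l - w i l) i l.
  move=> i l; rewrite (isrhoE H1) (isrhoE H2) /etaf /d_h /gmul; ring.
have S0 : \sum_(l < N) \sum_(i < n) (rho2 i l - rho1 i l) = 0.
  rewrite exchange_big /= big1 // => i _.
  under eq_bigr do rewrite He. exact: sum_eta.
rewrite /Ef -mulrBr -!mulrDr; congr (_ * _).
have key : \sum_(l < N) \sum_(i < n) rho2 i l * ln (rho2 i l) - \sum_(l < N) \sum_(i < n) rho1 i l * ln (rho1 i l)
  = \sum_(l < N) \sum_(i < n) etaf (fun i l => w' i l - w i l) i l * ln (rho1 i l)
   + \sum_(l < N) \sum_(i < n) Bt (rho2 i l) (rho1 i l) + \sum_(l < N) \sum_(i < n) (rho2 i l - rho1 i l).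
  rewrite -sumrB -!big_split /=; apply: eq_bigr => l _.
  rewrite -sumrB -!big_split /=; apply: eq_bigr => i _.
  rewrite -He /Bt; ring.
by rewrite key S0 addr0.
Qed.

Lemma b_anti i j (x y : R) : b j i * (y - x) = - (b i j * (x - y)).
Proof.
have [->|ij] := eqVneq i j; first ring.
by have [_ ->] := bsym ij; ring.
Qed.

Lemma h_neq0 : h != 0.
Proof. exact: lt0r_neq0 h_gt0. Qed.

Lemma LQ_grad w z : LQ w z = \sum_(l < N) \sum_(i < n) z i l * (hk i l * h *
   (dt^-1 * \sum_(j < n) b i j * hk j l * (w i l - w j l))).
Proof.
rewrite /LQ mulrA mulr_sumr; apply: eq_bigr => l _.
pose c i j := b i j * hk i l * hk j l * (w i l - w j l).
have A0 : \sum_(i < n) \sum_(j < n) c i j * (z i l + z j l) = 0.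
  apply: antisym_sum0 => i j; rewrite /c.
  have := b_anti i j (w i l) (w j l); move=> e.
  have -> : b j i * hk j l * hk i l * (w j l - w i l) * (z j l + z i l)
     = (b j i * (w j l - w i l)) * (hk j l * hk i l * (z j l + z i l)) by ring.
  rewrite e; ring.
have -> : \sum_(i < n) \sum_(j < n) b i j * hk i l * hk j l * (2 * (w i l - w j l) * (z i l - z j l))
   = \sum_(i < n) \sum_(j < n) (4 * (c i j * z i l) - 2 * (c i j * (z i l + z j l))).
  by apply: eq_bigr => i _; apply: eq_bigr => j _; rewrite /c; ring.
have -> : \sum_(i < n) \sum_(j < n) (4 * (c i j * z i l) - 2 * (c i j * (z i l + z j l)))
   = 4 * (\sum_(i < n) \sum_(j < n) c i j * z i l) - 2 * (\sum_(i < n) \sum_(j < n) c i j * (z i l + z j l)).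
  rewrite !mulr_sumr -sumrB; apply: eq_bigr => i _; rewrite !mulr_sumr -sumrB; done.
rewrite A0 mulr0 subr0 mulr_sumr mulr_sumr; apply: eq_bigr => i _.
rewrite !mulr_sumr; apply: eq_bigr => j _; rewrite /c.
have dn := lt0r_neq0 dt0; field; exact: dn.
Qed.

Lemma E_grad rho z : h * \sum_(l < N) \sum_(i < n) etaf z i l * ln (rho i l) =
  \sum_(l < N) \sum_(i < n) z i l * (hk i l * h * D_h h (glog (rho i)) l).
Proof.
rewrite exchange_big [RHS]exchange_big /= mulr_sumr; apply: eq_bigr => i _.
pose phi l := hk i l * z i l.
pose g l := ln (rho i l).
have -> : h * \sum_(l < N) etaf z i l * ln (rho i l) =
   \sum_(l < N) phi (ord_pred l) * g l - \sum_(l < N) phi l * g l.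
  rewrite mulr_sumr -sumrB; apply: eq_bigr => l _.
  rewrite /etaf /d_h /gmul /phi /g; have hn := h_neq0; field; exact: hn.
rewrite -(sum_succ (fun l => phi (ord_pred l) * g l)) /=.
under eq_bigr do rewrite ordSK.
rewrite -sumrB; apply: eq_bigr => l _.
rewrite /D_h /glog /phi /g; have hn := h_neq0; field; exact: hn.
Qed.

Lemma Dfun_grad w rho z : Dfun w rho z = \sum_(l < N) \sum_(i < n) z i l * (hk i l * h *
   (dt^-1 * \sum_(j < n) b i j * hk j l * (w i l - w j l) + D_h h (glog (rho i)) l)).
Proof.
rewrite /Dfun LQ_grad E_grad -big_split /=; apply: eq_bigr => l _.
rewrite -big_split /=; apply: eq_bigr => i _; ring.
Qed.

Lemma scheme_Dfun0 rho v w : scheme_with L dt b rhok rho v ->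
  (forall i l, w i l = dt * v i l) -> forall z, consw z -> Dfun w rho z = 0.
Proof.
move=> Hs Hw z Hz; rewrite Dfun_grad big1 // => l _.
pose T := \sum_(j < n) hat (rhok j) l * D_h h (glog (rho j)) l.
have E2 : forall i, dt^-1 * \sum_(j < n) b i j * hk j l * (w i l - w j l) + D_h h (glog (rho i)) l = T.
  move=> i; have [_ e2 _] := Hs i l.
  rewrite hk_sum invr1 mul1r in e2.
  have -> : \sum_(j < n) b i j * hk j l * (w i l - w j l) = dt * \sum_(j < n) b i j * hk j l * (v i l - v j l).
    rewrite mulr_sumr; apply: eq_bigr => j _; rewrite !Hw; ring.
  rewrite mulKf ?lt0r_neq0 //; rewrite /T; lra.
under eq_bigr do rewrite E2.
rewrite (eq_bigr (fun i => h * T * (hat (rhok i) l * z i l))); last by move=> i _; ring.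
by rewrite -mulr_sumr Hz mulr0.
Qed.

Lemma stat_scheme w rho : isrho w rho -> consw w ->
  (forall z, consw z -> Dfun w rho z = 0) -> scheme_with L dt b rhok rho (fun i l => w i l / dt).
Proof.
move=> Hr Hc Hst i0 l0.
have dn := lt0r_neq0 dt0.
pose A i l := dt^-1 * \sum_(j < n) b i j * hk j l * (w i l - w j l) + D_h h (glog (rho i)) l.
pose T l := \sum_(j < n) hat (rhok j) l * D_h h (glog (rho j)) l.
have HA : A i0 l0 = T l0.
  pose z k l := if l == l0 then (if k == i0 then (hk i0 l0)^-1 else 0) - 1 else 0.
  have cz : consw z.
    move=> l; rewrite /z; have [->|ll] := eqVneq l l0; last by rewrite big1 // => j _; rewrite mulr0.
    under eq_bigr do rewrite mulrBr mulr1.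
    rewrite sumrB hk_sum (bigD1 i0) //= eqxx big1 => [|j /negbTE ->]; last by rewrite mulr0.
    by rewrite addr0 divff ?lt0r_neq0 ?hk_gt0 // subrr.
  have e0 := Hst z cz; rewrite Dfun_grad (bigD1 l0) //= [X in _ + X]big1 ?addr0 in e0; last first.
    by move=> l /negbTE ll; rewrite big1 // => k _; rewrite /z ll mul0r.
  move: e0; rewrite /z eqxx.
  under eq_bigr do rewrite mulrBl mul1r.
  rewrite sumrB (bigD1 i0) //= eqxx [X in (_ + X) - _]big1; last by move=> j /negbTE ->; rewrite mul0r.
  rewrite addr0 -/(A i0 l0).
  have -> : \sum_(i < n) hk i l0 * h * (dt^-1 * \sum_(j < n) b i j * hk j l0 * (w i l0 - w j l0)
      + D_h h (glog (rho i)) l0) = h * (dt^-1 * \sum_(i < n) \sum_(j < n) hk i l0 * (b i j * hk j l0 * (w i l0 - w j l0))) + h * T l0.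
    rewrite /T !mulr_sumr -big_split /=; apply: eq_bigr => i _.
    rewrite mulrDr; congr (_ + _); last ring.
    rewrite -mulr_sumr; ring.
  rewrite antisym_sum0; last first.
    move=> i j; have := b_anti i j (w i l0) (w j l0) => e.
    have -> : hk j l0 * (b j i * hk i l0 * (w j l0 - w i l0)) = hk j l0 * hk i l0 * (b j i * (w j l0 - w i l0)) by ring.
    rewrite e; ring.
  rewrite mulr0 mulr0 add0r.
  have -> : (hk i0 l0)^-1 * (hk i0 l0 * h * A i0 l0) = h * A i0 l0.
    have := lt0r_neq0 (hk_gt0 i0 l0) => hn; field; exact: hn.
  move=> e; have hn := h_neq0.
  have : h * (A i0 l0 - T l0) = 0 by rewrite mulrBr.
  by move/eqP; rewrite mulf_eq0 (negbTE hn) /= subr_eq0 => /eqP.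
split.
- have := Hr i0 l0; rewrite /d_h /gmul => e.
  have -> : rho i0 l0 - rhok i0 l0 = - ((hat (rhok i0) l0 * w i0 l0 - hat (rhok i0) (ord_pred l0) * w i0 (ord_pred l0)) / h) by lra.
  field; rewrite dn h_neq0 //.
- rewrite hk_sum invr1 mul1r.
  have -> : \sum_(j < n) b i0 j * hat (rhok j) l0 * (w i0 l0 / dt - w j l0 / dt) = dt^-1 * \sum_(j < n) b i0 j * hk j l0 * (w i0 l0 - w j l0).
    rewrite mulr_sumr; apply: eq_bigr => j _; field; exact: dn.
  move: HA; rewrite /A /T; lra.
- rewrite (eq_bigr (fun j => (hat (rhok j) l0 * w j l0) / dt)); last by move=> j _; rewrite mulrA.
  by rewrite -mulr_suml Hc mul0r.
Qed.

Lemma eta_add w z t i l : etaf (fun i l => w i l + t * z i l) i l = etaf w i l + t * etaf z i l.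
Proof. rewrite /etaf /d_h /gmul; ring. Qed.

Lemma J_step w rho z t rho' : isrho w rho -> isrho (fun i l => w i l + t * z i l) rho' ->
  (forall i l, 0 < rho i l) -> (forall i l, 0 < rho' i l) ->
  J L dt b rhok rho' (fun i l => w i l + t * z i l) - J L dt b rhok rho w <=
  t * Dfun w rho z + t ^+ 2 * (Qf z + h * \sum_(l < N) \sum_(i < n) (etaf z i l) ^+ 2 / rho i l).
Proof.
move=> H1 H2 p1 p2; rewrite (J_expand H1 H2 p1 p2).
have -> : (fun i l => w i l + t * z i l - w i l) = (fun i l => t * z i l).
  by apply: boolp.funext => i; apply: boolp.funext => l; ring.
rewrite Dfun_scale Qf_scale mulrDr -addrA lerD2l mulrDr lerD2l.
rewrite mulrCA ler_wpM2l ?(ltW h_gt0) // mulr_sumr ler_sum // => l _.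
rewrite mulr_sumr ler_sum // => i _.
have e : rho' i l - rho i l = t * etaf z i l.
  by rewrite (isrhoE H1) (isrhoE H2) eta_add; ring.
apply: le_trans (Bt_le (p2 i l) (p1 i l)) _.
by rewrite e le_eqVlt; apply/orP; left; apply/eqP; ring.
Qed.

Lemma sum_rho1 w rho : isrho w rho -> consw w -> forall l, \sum_(i < n) rho i l = 1.
Proof.
move=> Hr Hc l.
rewrite (eq_bigr (fun i => rhok i l - d_h h (gmul (hat (rhok i)) (w i)) l)); last by move=> i _; have := Hr i l; lra.
by rewrite sumrB rk1 /d_h /gmul -mulr_suml sumrB !Hc subrr mul0r subr0.
Qed.

Lemma sumB_le0 (ra rb : 'I_n -> 'I_N -> R) : (forall i l, 0 < ra i l) -> (forall i l, 0 < rb i l) ->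
  \sum_(l < N) \sum_(i < n) Bt (ra i l) (rb i l) <= 0 -> forall i l, ra i l = rb i l.
Proof.
move=> pa pb S i l; apply/eqP; apply: contraT => ne.
have g := Bt_gt0 (pa i l) (pb i l) ne.
suff : Bt (ra i l) (rb i l) <= 0 by rewrite leNgt g.
apply: le_trans S.
have Hl : forall l', 0 <= \sum_(i < n) Bt (ra i l') (rb i l').
  by move=> l'; apply: sumr_ge0 => i' _; apply: Bt_ge0.
rewrite (bigD1 l) //= -[X in X <= _]addr0 lerD //; last by apply: sumr_ge0 => l' _; exact: Hl.
rewrite (bigD1 i) //= -[X in X <= _]addr0 lerD //.
by apply: sumr_ge0 => i' _; apply: Bt_ge0.
Qed.

Lemma hsumB_ge0 (ra rb : 'I_n -> 'I_N -> R) : (forall i l, 0 < ra i l) -> (forall i l, 0 < rb i l) ->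
  0 <= h * \sum_(l < N) \sum_(i < n) Bt (ra i l) (rb i l).
Proof.
move=> pa pb; rewrite mulr_ge0 ?(ltW h_gt0) //.
by apply: sumr_ge0 => l _; apply: sumr_ge0 => i _; apply: Bt_ge0.
Qed.

Lemma cons_sub w w' : consw w -> consw w' -> consw (fun i l => w' i l - w i l).
Proof.
move=> H H' l; rewrite (eq_bigr (fun j => hat (rhok j) l * w' j l - hat (rhok j) l * w j l)).
  by rewrite sumrB H H' subrr.
by move=> j _; rewrite mulrBr.
Qed.

Lemma main_from_exist eps rs ws : 0 < eps -> (forall i l, eps <= rs i l) -> isrho ws rs -> consw ws ->
  scheme_with L dt b rhok rs (fun i l => ws i l / dt) ->
  forall delta : R, 0 < delta -> delta <= eps ->
    forall rhonew : 'I_n -> 'I_N -> R,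
      (forall (i : 'I_n) (l : 'I_N), 0 < rhonew i l) ->
      (solves_scheme L dt b rhok rhonew <->
       exists w : 'I_n -> 'I_N -> R, is_minimizer L dt b rhok delta rhonew w).
Proof.
move=> eps0 rse Hrs Hcs Hss delta d0 de rhonew pn.
have dn := lt0r_neq0 dt0.
have prs : forall i l, 0 < rs i l by move=> i l; exact: lt_le_trans eps0 (rse i l).
have wsE : forall i l, ws i l = dt * (ws i l / dt) by move=> i l; field.
have Ds := scheme_Dfun0 Hss wsE.
split.
- move=> [v Hs].
  pose w1 i l := dt * v i l.
  have Hr1 : isrho w1 rhonew.
    move=> i l; have [e1 _ _] := Hs i l.
    have -> : d_h h (gmul (hat (rhok i)) (w1 i)) l = dt * d_h h (gmul (hat (rhok i)) (v i)) l.
      by rewrite /d_h /gmul /w1; ring.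
    have e : rhonew i l - rhok i l = dt * ((rhonew i l - rhok i l) / dt) by field.
    rewrite e; have -> : (rhonew i l - rhok i l) / dt = - d_h h (gmul (hat (rhok i)) (v i)) l by lra.
    ring.
  have Hc1 : consw w1.
    move=> l; have [_ _ e3] := Hs (Ordinal n0) l.
    rewrite /w1 (eq_bigr (fun j => dt * (hat (rhok j) l * v j l))); last by move=> j _; ring.
    by rewrite -mulr_sumr e3 mulr0.
  have D1 := scheme_Dfun0 Hs (fun i l => erefl (w1 i l)).
  have E1 := J_expand Hr1 Hrs pn prs.
  have E2 := J_expand Hrs Hr1 prs pn.
  rewrite D1 in E1; last exact: cons_sub.
  rewrite Ds in E2; last exact: cons_sub.
  have Q1 := Qf_ge0 (fun i l => ws i l - w1 i l).
  have Q2 := Qf_ge0 (fun i l => w1 i l - ws i l).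
  have B1 := hsumB_ge0 prs pn.
  have B2 := hsumB_ge0 pn prs.
  have : h * \sum_(l < N) \sum_(i < n) Bt (rhonew i l) (rs i l) <= 0 by lra.
  rewrite pmulr_rle0 ?h_gt0 // => S.
  have eq := sumB_le0 pn prs S.
  exists w1; split.
    move=> i l; split; first by rewrite eq; exact: le_trans de (rse i l).
    - exact: Hr1 i l.
    - exact: Hc1 l.
    - exact: sum_rho1 Hr1 Hc1 l.
  move=> rho' w' K'.
  have Hr' : isrho w' rho' by move=> i l; have [_ e _ _] := K' i l.
  have Hc' : consw w' by move=> l; have [_ _ e _] := K' (Ordinal n0) l.
  have p' : forall i l, 0 < rho' i l by move=> i l; have [e _ _ _] := K' i l; exact: lt_le_trans d0 e.
  have E := J_expand Hr1 Hr' pn p'.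
  rewrite D1 in E; last exact: cons_sub.
  have := Qf_ge0 (fun i l => w' i l - w1 i l).
  have := hsumB_ge0 p' pn.
  lra.
- move=> [w [Kw Hmin]].
  have Hr : isrho w rhonew by move=> i l; have [_ e _ _] := Kw i l.
  have Hc : consw w by move=> l; have [_ _ e _] := Kw (Ordinal n0) l.
  have Ks : K_delta L rhok delta rs ws.
    move=> i l; split; first exact: le_trans de (rse i l).
    - exact: Hrs i l.
    - exact: Hcs l.
    - exact: sum_rho1 Hrs Hcs l.
  have J1 := Hmin _ _ Ks.
  have E := J_expand Hrs Hr prs pn.
  rewrite Ds in E; last exact: cons_sub.
  have := Qf_ge0 (fun i l => w i l - ws i l).
  move=> Q.
  have : h * \sum_(l < N) \sum_(i < n) Bt (rhonew i l) (rs i l) <= 0 by lra.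
  rewrite pmulr_rle0 ?h_gt0 // => S.
  have eq := sumB_le0 pn prs S.
  have -> : rhonew = rs by apply: boolp.funext => i; apply: boolp.funext => l; exact: eq.
  by exists (fun i l => ws i l / dt).
Qed.

Definition rhoof (w : 'I_n -> 'I_N -> R) i l := rhok i l + etaf w i l.
Definition Fw w := J L dt b rhok (rhoof w) w.
Definition w0 : 'I_n -> 'I_N -> R := fun _ _ => 0.

Lemma isrho_rhoof w : isrho w (rhoof w).
Proof. by move=> i l; rewrite /rhoof /etaf; ring. Qed.

Lemma rhoof_w0 i l : rhoof w0 i l = rhok i l.
Proof. by rewrite /rhoof /etaf /d_h /gmul /w0 !mulr0 subrr mul0r oppr0 addr0. Qed.

Lemma tq_ge0 w l i j : 0 <= b i j * hk i l * hk j l * (w i l - w j l) ^+ 2.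
Proof.
have [->|ij] := eqVneq i j; first by rewrite subrr expr0n /= mulr0.
have [b0 _] := bsym ij.
have h1 := hk_gt0 i l; have h2 := hk_gt0 j l.
apply: mulr_ge0; last exact: sqr_ge0.
by apply: mulr_ge0; [apply: mulr_ge0|]; apply: ltW.
Qed.

Lemma Ef_ge rho : (forall i l, 0 < rho i l) -> - (h * \sum_(l < N) \sum_(i < n) 1) <= Ef rho.
Proof.
move=> p; rewrite /Ef -mulrN ler_wpM2l ?(ltW h_gt0) // -sumrN ler_sum // => l _.
by rewrite -sumrN ler_sum // => i _; apply: xlnx_ge.
Qed.

Lemma apriori : exists2 M, 0 <= M & forall w, consw w -> (forall i l, 0 < rhoof w i l) ->
  Fw w <= Fw w0 -> forall i l, `|w i l| <= M.
Proof.
pose K0 := Fw w0 + h * \sum_(l < N) \sum_(i < n) (1 : R).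
pose K1 := K0 * (4 * dt) / h.
pose D := \sum_(l < N) \sum_(i < n) \sum_(j < n) (1 + `|K1 / (b i j * hk i l * hk j l)|).
have D0 : forall l i j, 0 <= 1 + `|K1 / (b i j * hk i l * hk j l)| by move=> l i j; rewrite addr_ge0 ?normr_ge0.
exists D.
  by apply: sumr_ge0 => l _; apply: sumr_ge0 => i _; apply: sumr_ge0 => j _.
move=> w Hc Hp HF.
have hn := h_neq0.
have QK : Qf w <= K0.
  have := Ef_ge Hp; move: HF; rewrite /Fw JE /K0 /Fw; lra.
have TK : \sum_(l < N) \sum_(i < n) \sum_(j < n) b i j * hk i l * hk j l * (w i l - w j l) ^+ 2 <= K1.
  have -> : \sum_(l < N) \sum_(i < n) \sum_(j < n) b i j * hk i l * hk j l * (w i l - w j l) ^+ 2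
     = Qf w * (4 * dt) / h.
    rewrite /Qf; field; apply/andP; split => //; exact: lt0r_neq0.
  rewrite /K1; apply: ler_wpM2r; first by rewrite invr_ge0 ltW // h_gt0.
  apply: ler_wpM2r. all: try exact: QK. by rewrite mulr_ge0 // ltW.
have Hd : forall l i j, `|w i l - w j l| <= D.
  move=> l i j.
  apply: le_trans (_ : 1 + `|K1 / (b i j * hk i l * hk j l)| <= D); last first.
    have n1 : forall l', 0 <= \sum_(i < n) \sum_(j < n) (1 + `|K1 / (b i j * hk i l' * hk j l')|).
      by move=> l'; apply: sumr_ge0 => i' _; apply: sumr_ge0 => j' _.
    rewrite /D; apply: (le_trans _ (@le_sum_term _ _ (fun l => \sum_(i < n) \sum_(j < n) (1 + `|K1 / (b i j * hk i l * hk j l)|)) l n1)).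
    have n2 : forall i', 0 <= \sum_(j < n) (1 + `|K1 / (b i' j * hk i' l * hk j l)|).
      by move=> i'; apply: sumr_ge0 => j' _.
    apply: (le_trans _ (@le_sum_term _ _ (fun i => \sum_(j < n) (1 + `|K1 / (b i j * hk i l * hk j l)|)) i n2)).
    exact: (@le_sum_term _ _ (fun j => (1 + `|K1 / (b i j * hk i l * hk j l)|)) j (D0 l i)).
  have [->|ij] := eqVneq i j; first by rewrite subrr normr0.
  have [b0 _] := bsym ij.
  have a0 : 0 < b i j * hk i l * hk j l.
    by apply: mulr_gt0; [apply: mulr_gt0 => //|]; exact: hk_gt0.
  have tle : b i j * hk i l * hk j l * (w i l - w j l) ^+ 2 <= K1.
    apply: le_trans TK.
    have n1 : forall l', 0 <= \sum_(i < n) \sum_(j < n) b i j * hk i l' * hk j l' * (w i l' - w j l') ^+ 2.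
      by move=> l'; apply: sumr_ge0 => i' _; apply: sumr_ge0 => j' _; apply: tq_ge0.
    apply: (le_trans _ (@le_sum_term _ _ (fun l => \sum_(i < n) \sum_(j < n) b i j * hk i l * hk j l * (w i l - w j l) ^+ 2) l n1)).
    have n2 : forall i', 0 <= \sum_(j < n) b i' j * hk i' l * hk j l * (w i' l - w j l) ^+ 2.
      by move=> i'; apply: sumr_ge0 => j' _; apply: tq_ge0.
    apply: (le_trans _ (@le_sum_term _ _ (fun i => \sum_(j < n) b i j * hk i l * hk j l * (w i l - w j l) ^+ 2) i n2)).
    exact: (@le_sum_term _ _ (fun j => b i j * hk i l * hk j l * (w i l - w j l) ^+ 2) j (tq_ge0 w l i)).
  have sq : (w i l - w j l) ^+ 2 <= K1 / (b i j * hk i l * hk j l).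
    by rewrite ler_pdivlMr // mulrC.
  apply: le_trans (abs_le_sq _) _; rewrite lerD2l; apply: le_trans sq _; exact: ler_norm.
move=> i l.
have -> : w i l = \sum_(j < n) hk j l * (w i l - w j l).
  under eq_bigr do rewrite mulrBr.
  by rewrite sumrB Hc subr0 -mulr_suml hk_sum mul1r.
apply: le_trans (ler_norm_sum _ _ _) _.
apply: le_trans (_ : \sum_(j < n) hk j l * D <= D); last by rewrite -mulr_suml hk_sum mul1r.
apply: ler_sum => j _; rewrite normrM ger0_norm ?(ltW (hk_gt0 _ _)) // ler_wpM2l ?(ltW (hk_gt0 _ _)) //.
Qed.

Definition Cset eps w := consw w /\ forall i l, eps <= rhoof w i l.

Lemma first_order eps w z t0 : 0 < eps -> Cset eps w -> (forall w', Cset eps w' -> Fw w <= Fw w') -> 0 < t0 ->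
  (forall t, 0 < t -> t <= t0 -> Cset eps (fun i l => w i l + t * z i l)) -> 0 <= Dfun w (rhoof w) z.
Proof.
move=> e0 [Hc He] Hmin t00 Hfeas.
set D := Dfun w (rhoof w) z.
set C := Qf z + h * \sum_(l < N) \sum_(i < n) (etaf z i l) ^+ 2 / rhoof w i l.
have p1 : forall i l, 0 < rhoof w i l by move=> i l; exact: lt_le_trans e0 (He i l).
have key : forall t, 0 < t -> t <= t0 -> 0 <= t * D + t ^+ 2 * C.
  move=> t tp tt0; have [Hc' He'] := Hfeas t tp tt0.
  have p2 : forall i l, 0 < rhoof (fun i l => w i l + t * z i l) i l.
    by move=> i l; exact: lt_le_trans e0 (He' i l).
  have st := J_step (isrho_rhoof w) (isrho_rhoof (fun i l => w i l + t * z i l)) p1 p2.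
  have := Hmin _ (conj Hc' He'); rewrite /Fw; rewrite -/D -/C in st; lra.
rewrite leNgt; apply/negP => Dn.
pose a := `|C| + 1.
have a0 : 0 < a by rewrite /a; have := normr_ge0 C; lra.
pose t := Num.min t0 (- D / a).
have tp : 0 < t by rewrite /t lt_min t00 /= divr_gt0 // oppr_gt0.
have tt0 : t <= t0 by rewrite /t ge_min lexx.
have tD : t <= - D / a by rewrite /t ge_min lexx orbT.
have ta : t * a <= - D by rewrite -ler_pdivlMr.
have k := key t tp tt0.
have Ca : C <= a - 1 by rewrite /a; have := ler_norm C; lra.
have m1 : t ^+ 2 * C <= t ^+ 2 * (a - 1) by rewrite ler_wpM2l // sqr_ge0.
have m2 : t * (t * a) <= t * (- D) by rewrite ler_wpM2l // ltW.
have : 0 < t ^+ 2 by rewrite exprn_gt0.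
move: k m1 m2; rewrite expr2; nra.
Qed.

Lemma val_pred (e : 'I_N) : val (ord_pred e) = if val e == 0%N then N.-1 else (val e).-1.
Proof.
case: e => [[|m] lt] /=.
  by rewrite add0n modn_small // prednK.
by rewrite modnDr modn_small // ltnW.
Qed.

Lemma ind_step (a e : 'I_N) :
  ((a <= e)%N%:R : R) - ((a <= ord_pred e)%N)%:R = (e == a)%:R - (val e == 0%N)%:R.
Proof.
have va := ltn_ord a.
rewrite val_pred; case: e => [[|m] lt] /=.
  rewrite (_ : (a <= N.-1)%N = true); last by rewrite -ltnS prednK.
  have E : (a <= 0)%N = (Ordinal lt == a).
    apply/idP/eqP => [a0|<-//]; apply/val_inj => /=; apply/eqP; by rewrite eq_sym -leqn0.
  by rewrite E.
rewrite subr0.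
have -> : (Ordinal lt == a) = (a == m.+1 :> nat) by rewrite eq_sym.
rewrite leq_eqVlt ltnS.
have [am|am] := eqVneq (a : nat) m.+1.
  by rewrite am ltnn /= subr0.
by rewrite /= subrr.
Qed.

Definition flux (l0 l1 : 'I_N) (e : 'I_N) : R := h * (((l1 <= e)%N)%:R - ((l0 <= e)%N)%:R).

Lemma flux_step l0 l1 e : flux l0 l1 e - flux l0 l1 (ord_pred e) = h * ((e == l1)%:R - (e == l0)%:R).
Proof.
rewrite /flux -mulrBr; congr (_ * _).
have := ind_step l1 e; have := ind_step l0 e; lra.
Qed.

Lemma flux_norm l0 l1 e : `|flux l0 l1 e| <= h.
Proof.
rewrite /flux normrM ger0_norm ?(ltW h_gt0) //.
by rewrite -[X in _ <= X]mulr1 ler_wpM2l ?(ltW h_gt0) // ind_norm.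
Qed.

Definition zdir (i0 j : 'I_n) (l0 l1 : 'I_N) (k : 'I_n) (l : 'I_N) : R :=
  flux l0 l1 l * ((k == i0)%:R - (k == j)%:R) / hk k l.

Lemma zdir_cons i0 j l0 l1 : i0 != j -> consw (zdir i0 j l0 l1).
Proof.
move=> ij l; rewrite /zdir.
rewrite (eq_bigr (fun k => flux l0 l1 l * ((k == i0)%:R - (k == j)%:R))); last first.
  by move=> k _; have := lt0r_neq0 (hk_gt0 k l) => hn; field.
by rewrite -mulr_sumr sumrB !sum_ind1 subrr mulr0.
Qed.

Lemma zdir_eta i0 j l0 l1 k l :
  etaf (zdir i0 j l0 l1) k l = ((k == i0)%:R - (k == j)%:R) * ((l == l0)%:R - (l == l1)%:R).
Proof.
rewrite /etaf /d_h /gmul /zdir.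
have e1 := lt0r_neq0 (hk_gt0 k l); have e2 := lt0r_neq0 (hk_gt0 k (ord_pred l)).
have -> : hk k l * (flux l0 l1 l * ((k == i0)%:R - (k == j)%:R) / hk k l) -
    hk k (ord_pred l) * (flux l0 l1 (ord_pred l) * ((k == i0)%:R - (k == j)%:R) / hk k (ord_pred l))
  = (flux l0 l1 l - flux l0 l1 (ord_pred l)) * ((k == i0)%:R - (k == j)%:R) by field; rewrite e1 e2.
rewrite flux_step; have hn := h_neq0; field; exact: hn.
Qed.

Lemma zdir_norm i0 j l0 l1 k l : `|zdir i0 j l0 l1 k l| <= h / hk k l.
Proof.
have hp := hk_gt0 k l.
rewrite /zdir normrM normrV ?unitfE ?lt0r_neq0 // (gtr0_norm hp).
rewrite ler_pM2r ?invr_gt0 // normrM -[X in _ <= X]mulr1.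
apply: ler_pM => //; [exact: flux_norm | exact: ind_norm].
Qed.

Definition Zb := \sum_(k < n) \sum_(l < N) h / hk k l.
Definition CqM M := (4 * dt)^-1 * (h * \sum_(l < N) \sum_(i < n) \sum_(j < n)
   `|b i j * hk i l * hk j l| * (2 * (2 * M) * (2 * Zb))).

Lemma zdir_Zb i0 j l0 l1 k l : `|zdir i0 j l0 l1 k l| <= Zb.
Proof.
apply: le_trans (zdir_norm _ _ _ _ k l) _.
have p : forall k l, 0 <= h / hk k l by move=> *; rewrite divr_ge0 ?ltW ?h_gt0 ?hk_gt0.
have n1 : forall k', 0 <= \sum_(l < N) h / hk k' l by move=> k'; apply: sumr_ge0 => *.
apply: (le_trans _ (@le_sum_term _ _ (fun k => \sum_(l < N) h / hk k l) k n1)).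
exact: (@le_sum_term _ _ (fun l => h / hk k l) l (p k)).
Qed.

Lemma LQ_bound w z M : (forall i l, `|w i l| <= M) -> (forall i l, `|z i l| <= Zb) ->
  LQ w z <= CqM M.
Proof.
move=> Hw Hz; rewrite /LQ /CqM.
apply: ler_wpM2l; first by rewrite invr_ge0 mulr_ge0 // ltW.
apply: ler_wpM2l; first exact: ltW h_gt0.
apply: le_trans (ler_norm _) _; apply: le_trans (ler_norm_sum _ _ _) _.
apply: ler_sum => l _; apply: le_trans (ler_norm_sum _ _ _) _.
apply: ler_sum => i _; apply: le_trans (ler_norm_sum _ _ _) _.
apply: ler_sum => j _.
rewrite normrM; apply: ler_wpM2l => //.
rewrite !normrM (ger0_norm (_ : (0 : R) <= 2)) //.
rewrite -mulrA -[X in _ <= X]mulrA ler_wpM2l //.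
apply: ler_pM => //.
  apply: le_trans (ler_normB _ _) _; have := Hw i l; have := Hw j l; lra.
apply: le_trans (ler_normB _ _) _; have := Hz i l; have := Hz j l; lra.
Qed.

Lemma zdir_feas eps w i0 j l0 l1 t0 : Cset eps w -> i0 != j -> l0 != l1 ->
  t0 + eps <= rhoof w i0 l1 -> t0 + eps <= rhoof w j l0 ->
  forall t, 0 < t -> t <= t0 -> Cset eps (fun i l => w i l + t * zdir i0 j l0 l1 i l).
Proof.
move=> [Hc He] ij l01 b1 b2 t tp tt0; split.
  move=> l; rewrite (eq_bigr (fun k => hk k l * w k l + t * (hk k l * zdir i0 j l0 l1 k l))); last by move=> k _; ring.
  by rewrite big_split /= -mulr_sumr Hc (zdir_cons l0 l1 ij) mulr0 addr0.
move=> k l.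
have -> : rhoof (fun i l => w i l + t * zdir i0 j l0 l1 i l) k l = rhoof w k l + t * etaf (zdir i0 j l0 l1) k l.
  by rewrite /rhoof eta_add; ring.
rewrite zdir_eta; have := He k l.
case E1 : (k == i0); case E2 : (k == j); case E3 : (l == l0); case E4 : (l == l1);
  rewrite /= ?mulr1n ?mulr0n => Hk.
all: try lra.
all: try (by move: ij; rewrite -(eqP E1) E2).
all: try (by move: l01; rewrite -(eqP E3) E4).
all: try (rewrite (eqP E1) (eqP E4); lra).
all: try (rewrite (eqP E2) (eqP E3); lra).
Qed.

Lemma rho_le1 w : consw w -> (forall i l, 0 < rhoof w i l) -> forall i l, rhoof w i l <= 1.
Proof.
move=> Hc p i l; rewrite -(sum_rho1 (isrho_rhoof w) Hc l).
exact: (@le_sum_term _ _ (fun i => rhoof w i l) i (fun j => ltW (p j l))).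
Qed.

Lemma rk_le1 i l : rhok i l <= 1.
Proof.
rewrite -(rk1 l); exact: (@le_sum_term _ _ (fun i => rhok i l) i (fun j => ltW (rk0 j l))).
Qed.

Lemma mass w i : \sum_(l < N) rhoof w i l = \sum_(l < N) rhok i l.
Proof. by rewrite /rhoof big_split /= sum_eta addr0. Qed.

Lemma Zb_ge0 : 0 <= Zb.
Proof. by apply: sumr_ge0 => k _; apply: sumr_ge0 => l _; rewrite divr_ge0 ?ltW ?h_gt0 ?hk_gt0. Qed.

Lemma CqM_ge0 M : 0 <= M -> 0 <= CqM M.
Proof.
move=> M0; rewrite /CqM; apply: mulr_ge0; first by rewrite invr_ge0 mulr_ge0 // ltW.
apply: mulr_ge0; first exact: ltW h_gt0.
apply: sumr_ge0 => l _; apply: sumr_ge0 => i _; apply: sumr_ge0 => j _.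
by rewrite mulr_ge0 // !mulr_ge0 // Zb_ge0.
Qed.

Lemma interior eps mu M w :
  0 < mu -> (forall i l, mu <= rhok i l) -> 0 <= M ->
  eps = mu / n%:R * expR (- (CqM M / h + 1)) ->
  Cset eps w -> (forall w', Cset eps w' -> Fw w <= Fw w') ->
  (forall i l, `|w i l| <= M) -> forall i l, eps < rhoof w i l.
Proof.
move=> mu0 muk M0 epsE [Hc He] Hmin HM i0 l0.
rewrite ltNge; apply/negP => Hle.
have nR : 0 < (n%:R : R) by rewrite ltr0n.
have hp := h_gt0; have hn := h_neq0.
have Cq0 := CqM_ge0 M0.
have ex0 := expR_gt0 (- (CqM M / h + 1)).
have exl1 : expR (- (CqM M / h + 1)) < 1.
  rewrite -expR0 ltr_expR oppr_lt0; apply: ltr_wpDl => //; exact: divr_ge0 (ltW hp).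
have eps0 : 0 < eps by rewrite epsE !mulr_gt0 // invr_gt0.
have mu1 : mu <= 1 := le_trans (muk i0 l0) (rk_le1 i0 l0).
have epsmu : eps < mu / n%:R.
  by rewrite epsE -[X in _ < X]mulr1 ltr_pM2l // divr_gt0.
have n1 : (1 : R) <= n%:R by rewrite ler1n.
have mun : mu / n%:R <= mu.
  by rewrite ler_pdivrMr //; have := ler_wpM2l (ltW mu0) n1; rewrite mulr1.
have mun1 : mu / n%:R <= n%:R^-1 by rewrite -[X in _ <= X]mul1r ler_pM2r ?invr_gt0.
have p : forall i l, 0 < rhoof w i l by move=> i l; exact: lt_le_trans eps0 (He i l).
have r1 := rho_le1 Hc p.
have [j Hj] : exists j, n%:R^-1 <= rhoof w j l0.
  apply: (@exists_ge _ _ (fun j => rhoof w j l0)); first by rewrite card_ord.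
  by rewrite card_ord (sum_rho1 (isrho_rhoof w) Hc l0) mulfV // lt0r_neq0.
have [l1 Hl1] : exists l1, mu <= rhoof w i0 l1.
  apply: (@exists_ge _ _ (fun l => rhoof w i0 l)); first by rewrite card_ord.
  rewrite card_ord mass.
  apply: le_trans (_ : \sum_(l < N) mu <= _); last by apply: ler_sum => l _.
  by rewrite sumr_const card_ord mulr_natl.
have ij : i0 != j.
  apply/negP => /eqP e; move: Hj; rewrite -e; lra.
have l01 : l0 != l1.
  apply/negP => /eqP e; move: Hl1; rewrite -e; lra.
pose t0 := Num.min mu (n%:R^-1) - eps.
have mm : eps < Num.min mu (n%:R^-1) by rewrite lt_min; apply/andP; split; lra.
have t0p : 0 < t0 by rewrite /t0 subr_gt0.
have b1 : t0 + eps <= rhoof w i0 l1.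
  rewrite /t0 subrK; apply: le_trans Hl1; by rewrite ge_min lexx.
have b2 : t0 + eps <= rhoof w j l0.
  rewrite /t0 subrK; apply: le_trans Hj; by rewrite ge_min lexx orbT.
have D0 := first_order eps0 (conj Hc He) Hmin t0p (zdir_feas (conj Hc He) ij l01 b1 b2).
have LQb := LQ_bound HM (zdir_Zb i0 j l0 l1).
have E : \sum_(l < N) \sum_(k < n) etaf (zdir i0 j l0 l1) k l * ln (rhoof w k l)
   = (ln (rhoof w i0 l0) - ln (rhoof w j l0)) - (ln (rhoof w i0 l1) - ln (rhoof w j l1)).
  rewrite (eq_bigr (fun l => ((l == l0)%:R - (l == l1)%:R) * (ln (rhoof w i0 l) - ln (rhoof w j l)))).
    by rewrite sum_sg.
  move=> l _; under eq_bigr do rewrite zdir_eta.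
  rewrite (eq_bigr (fun k => ((l == l0)%:R - (l == l1)%:R) * (((k == i0)%:R - (k == j)%:R) * ln (rhoof w k l)))).
    by rewrite -mulr_sumr sum_sg.
  by move=> k _; ring.
have lnA : ln (rhoof w i0 l0) <= ln eps by rewrite ler_ln ?posrE.
have lnB : ln (n%:R^-1) <= ln (rhoof w j l0) by rewrite ler_ln ?posrE ?invr_gt0.
have lnC : ln mu <= ln (rhoof w i0 l1) by rewrite ler_ln ?posrE.
have lnD : ln (rhoof w j l1) <= 0 by apply: ln_le0.
have lneps : ln eps = ln mu - ln n%:R - (CqM M / h + 1).
  by rewrite epsE lnM ?posrE ?divr_gt0 // lnM ?posrE ?invr_gt0 // lnV ?posrE // expRK.
rewrite lnV ?posrE // in lnB.
have X : (ln (rhoof w i0 l0) - ln (rhoof w j l0)) - (ln (rhoof w i0 l1) - ln (rhoof w j l1)) <= - (CqM M / h + 1).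
  lra.
have hX : h * ((ln (rhoof w i0 l0) - ln (rhoof w j l0)) - (ln (rhoof w i0 l1) - ln (rhoof w j l1)))
    <= - CqM M - h.
  apply: le_trans (ler_wpM2l (ltW hp) X) _.
  by rewrite mulrN mulrDr mulr1 mulrCA divff // mulr1 opprD lexx.
move: D0; rewrite /Dfun E; lra.
Qed.

Lemma feas_gen eps w z : Cset eps w -> (forall i l, eps < rhoof w i l) -> consw z ->
  exists2 t0, 0 < t0 & forall t, 0 < t -> t <= t0 -> Cset eps (fun i l => w i l + t * z i l).
Proof.
move=> [Hc He] Hint Hz.
have gpos : forall p : ('I_n * 'I_N)%type, 0 < (rhoof w p.1 p.2 - eps) / (`|etaf z p.1 p.2| + 1).
  case=> i l /=; apply: divr_gt0; first by rewrite subr_gt0.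
  by have := normr_ge0 (etaf z i l); lra.
have [t0 t0p Ht0] := @posmin _ ('I_n * 'I_N)%type
   (fun p => (rhoof w p.1 p.2 - eps) / (`|etaf z p.1 p.2| + 1)) gpos.
exists t0 => // t tp tt0; split.
  move=> l; rewrite (eq_bigr (fun k => hk k l * w k l + t * (hk k l * z k l))); last by move=> k _; ring.
  by rewrite big_split /= -mulr_sumr Hc Hz mulr0 addr0.
move=> i l.
have -> : rhoof (fun i l => w i l + t * z i l) i l = rhoof w i l + t * etaf z i l.
  by rewrite /rhoof eta_add; ring.
have g := Ht0 (i, l); rewrite /= in g.
have a0 : 0 < `|etaf z i l| + 1 by have := normr_ge0 (etaf z i l); lra.
have k1 : t * (`|etaf z i l| + 1) <= rhoof w i l - eps.
  rewrite -ler_pdivlMr //; exact: le_trans tt0 g.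
have k2 : - (t * etaf z i l) <= t * `|etaf z i l|.
  rewrite -mulrN ler_wpM2l ?(ltW tp) //; rewrite -normrN; exact: ler_norm.
lra.
Qed.

Lemma stationary eps w : 0 < eps -> Cset eps w -> (forall w', Cset eps w' -> Fw w <= Fw w') ->
  (forall i l, eps < rhoof w i l) -> forall z, consw z -> Dfun w (rhoof w) z = 0.
Proof.
move=> e0 HC Hmin Hint z Hz.
have [t1 t1p H1] := feas_gen HC Hint Hz.
have Hz' : consw (fun i l => -1 * z i l).
  move=> l; rewrite (eq_bigr (fun k => -1 * (hk k l * z k l))); last by move=> k _; ring.
  by rewrite -mulr_sumr Hz mulr0.
have [t2 t2p H2] := feas_gen HC Hint Hz'.
have d1 := first_order e0 HC Hmin t1p H1.
have d2 := first_order e0 HC Hmin t2p H2.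
rewrite Dfun_scale in d2; lra.
Qed.

Local Open Scope classical_set_scope.

Definition Wof (u : 'rV[R]_(n * N)) : 'I_n -> 'I_N -> R := fun i l => u ord0 (mxvec_index i l).

Lemma Wof_mxvec w : Wof (mxvec (\matrix_(i, l) w i l)) = w.
Proof. by apply: boolp.funext => i; apply: boolp.funext => l; rewrite /Wof mxvecE mxE. Qed.

Lemma Wof0 : Wof 0 = w0.
Proof. by apply: boolp.funext => i; apply: boolp.funext => l; rewrite /Wof mxE. Qed.

Ltac cont := repeat first [exact: cC | exact: cK | apply: cD | apply: cN | apply: cX | apply: cM | apply: cS => ?].

Lemma exist_min eps M : 0 < eps -> (forall i l, eps <= rhok i l) -> 0 <= M ->
  (forall w, consw w -> (forall i l, 0 < rhoof w i l) -> Fw w <= Fw w0 -> forall i l, `|w i l| <= M) ->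
  exists w, [/\ Cset eps w, (forall w', Cset eps w' -> Fw w <= Fw w') & (forall i l, `|w i l| <= M)].
Proof.
move=> e0 ek M0 Hap.
pose Box := [set v : 'rV[R]_(n * N) | forall k, `[- M, M]%classic (v ord0 k)].
have cBox : compact Box.
  by apply: (@rV_compact _ _ (fun=> `[- M, M]%classic)) => _; exact: segment_compact.
pose f1 l (u : 'rV[R]_(n * N)) := \sum_(j < n) hk j l * Wof u j l.
pose f2 (p : 'I_n * 'I_N) (u : 'rV[R]_(n * N)) := rhoof (Wof u) p.1 p.2.
have cf1 : forall l u, {for u, continuous (f1 l)}.
  by move=> l u; rewrite /f1 /Wof; cont.
have cf2 : forall p u, {for u, continuous (f2 p)}.
  by move=> [i l] u; rewrite /f2 /rhoof /etaf /d_h /gmul /Wof /=; cont.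
pose S1 := \bigcap_(l in [set: 'I_N]) (f1 l @^-1` [set x | x = 0]).
pose S2 := \bigcap_(p in [set: ('I_n * 'I_N)%type]) (f2 p @^-1` [set x | eps <= x]).
have cS1 : closed S1.
  apply: closed_bigI => l _; apply: preimage_closed; [move=> u _; exact: cf1 | exact: closed_eq].
have cS2 : closed S2.
  apply: closed_bigI => p _; apply: preimage_closed; [move=> u _; exact: cf2 | exact: closed_ge].
pose A := Box `&` (S1 `&` S2).
have cA : compact A by apply: compact_closedI => //; exact: closedI.
have A0 : A 0.
  split; [|split].
  - move=> k /=; rewrite mxE in_itv /=; apply/andP; split; lra.
  - move=> l _; rewrite /f1 /= Wof0 big1 // => j _; by rewrite /w0 mulr0.
  - move=> [i l] _; rewrite /f2 /= Wof0 rhoof_w0; exact: ek.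
pose G u := Fw (Wof u).
have cG : {within A, continuous G}.
  apply: continuous_in_subspaceT => u /set_mem [_ [_ Hu2]].
  have pos : forall i l, 0 < rhoof (Wof u) i l.
    by move=> i l; exact: lt_le_trans e0 (Hu2 (i, l) I).
  rewrite /G /Fw /J; apply: cD.
    by rewrite /Wof; cont.
  apply: cM; first exact: cC.
  apply: cS => l; apply: cS => i; apply: cM; first exact: (cf2 (i, l) u).
  by apply: cL; [exact: (cf2 (i, l) u) | exact: pos].
have [c cA' cmin] := EVT_min_rV (ex_intro _ 0 A0) cA cG.
move/set_mem: cA' => [cB [c1 c2]].
exists (Wof c); split.
- split; first by move=> l; exact: (c1 l I).
  by move=> i l; exact: (c2 (i, l) I).
- move=> w' [Hc' He'].
  have p' : forall i l, 0 < rhoof w' i l by move=> i l; exact: lt_le_trans e0 (He' i l).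
  have [le|gt] := leP (Fw w') (Fw w0).
    have Hb := Hap w' Hc' p' le.
    pose u' := mxvec (\matrix_(i, l) w' i l).
    have Wu : Wof u' = w' := Wof_mxvec w'.
    have Au' : A u'.
      split; [|split].
      + move=> k; case: (mxvec_indexP k) => i l /=.
        by rewrite mxvecE mxE in_itv /= -ler_norml.
      + by move=> l _; rewrite /f1 /= Wu; exact: Hc'.
      + by move=> [i l] _; rewrite /f2 /= Wu; exact: He'.
    by have := cmin u' (mem_set Au'); rewrite /G Wu.
  have := cmin 0 (mem_set A0); rewrite /G Wof0 => h0; exact: le_trans h0 (ltW gt).
- move=> i l; have := cB (mxvec_index i l); by rewrite /= in_itv /= -ler_norml.
Qed.

Lemma existence : exists eps, exists rs, exists ws,
  [/\ 0 < eps, (forall i l, eps <= rs i l), isrho ws rs, consw ws &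
      scheme_with L dt b rhok rs (fun i l => ws i l / dt)].
Proof.
have [M M0 Hap] := apriori.
have [mu mu0 mup] := @posmin _ ('I_n * 'I_N)%type (fun p => rhok p.1 p.2) (fun p => rk0 p.1 p.2).
have muk : forall i l, mu <= rhok i l by move=> i l; exact: (mup (i, l)).
pose eps := mu / n%:R * expR (- (CqM M / h + 1)).
have nR : 0 < (n%:R : R) by rewrite ltr0n.
have e0 : 0 < eps by rewrite /eps !mulr_gt0 ?invr_gt0 ?expR_gt0.
have ex1 : expR (- (CqM M / h + 1)) <= 1.
  rewrite -expR0 ler_expR oppr_le0; apply: addr_ge0 => //; exact: divr_ge0 (CqM_ge0 M0) (ltW h_gt0).
have n1 : (1 : R) <= n%:R by rewrite ler1n.
have mun : mu / n%:R <= mu.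
  by rewrite ler_pdivrMr //; have := ler_wpM2l (ltW mu0) n1; rewrite mulr1.
have epsmu : eps <= mu.
  apply: le_trans mun; rewrite /eps -[X in _ <= X]mulr1 ler_wpM2l //.
  by rewrite divr_ge0 // ltW.
have ek : forall i l, eps <= rhok i l by move=> i l; exact: le_trans epsmu (muk i l).
have [w [HC Hmin Hb]] := exist_min e0 ek M0 Hap.
have Hint := interior mu0 muk M0 (erefl eps) HC Hmin Hb.
have Hst := stationary e0 HC Hmin Hint.
exists eps, (rhoof w), w; split => //.
- by move=> i l; exact: ltW (Hint i l).
- exact: isrho_rhoof.
- exact: HC.1.
- exact: stat_scheme (isrho_rhoof w) HC.1 Hst.
Qed.

Lemma final_sec : exists2 delta0 : R, 0 < delta0 &
    forall delta : R, 0 < delta -> delta <= delta0 ->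
    forall rhonew : 'I_n -> 'I_N -> R,
      (forall (i : 'I_n) (l : 'I_N), 0 < rhonew i l) ->
      (solves_scheme L dt b rhok rhonew <->
       exists w : 'I_n -> 'I_N -> R, is_minimizer L dt b rhok delta rhonew w).
Proof.
have [eps [rs [ws [e0 rse Hr Hc Hs]]]] := existence.
exists eps => //.
exact: main_from_exist e0 rse Hr Hc Hs.
Qed.

End Grid.

Theorem theorem3p1 (R : realType) (n N : nat) (L dt : R)
  (b : 'I_n -> 'I_n -> R) (rhok : 'I_n -> 'I_N -> R) :
  (2 <= n)%N -> (1 <= N)%N -> 0 < L -> 0 < dt ->
  (forall i j : 'I_n, i != j -> 0 < b i j /\ b i j = b j i) ->
  (forall (i : 'I_n) (l : 'I_N), 0 < rhok i l) ->
  (forall l : 'I_N, \sum_(i < n) rhok i l = 1) ->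
  exists2 delta0 : R, 0 < delta0 &
    forall delta : R, 0 < delta -> delta <= delta0 ->
    forall rhonew : 'I_n -> 'I_N -> R,
      (forall (i : 'I_n) (l : 'I_N), 0 < rhonew i l) ->
      (solves_scheme L dt b rhok rhonew <->
       exists w : 'I_n -> 'I_N -> R, is_minimizer L dt b rhok delta rhonew w).
Proof.
move=> n2 N1 L0 dt0 bsym rk0 rk1.
have n0 : (0 < n)%N := leq_trans (isT : (0 < 2)%N) n2.
by apply: final_sec.
Qed.
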